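(* Let $H$ be a reduced double-well type potential and $\gamma$ its Puiseux exponent. Then, as $\beta\to+\infty$, \begin{enumerate} \item $-\frac1\beta\ln(\lambda_\beta-1)\to\gamma$; \item for $i=0,1$, $-\frac1\beta\ln F_\beta^i(\lambda_\beta)\to\min\{H_{min}^i,\ H_\infty^i-\gamma\}$; \item for $i=0,1$, $-\frac1\beta\ln\tilde F_\beta^i(\lambda_\beta)\to\min\{H_{min}^i,\ H_\infty^i-2\gamma\}$. \end{enumerate}
   Context: $\Sigma:=\{0,1\}^{\mathbb N}$. A reduced double-well type potential is a continuous nonnegative $H:\Sigma\to\mathbb R$ with summable variation such that $H=0$ on $[00]\cup[11]$, $H=H_n^0>0$ on $[01^n0]$, $H=H_n^1>0$ on $[10^n1]$ ($n\ge1$), and $\sum_{k\ge1}\sup_{n\ge0}|H_k^i-H_{k+n}^i|<\infty$ ($i=0,1$). $H_\infty^i:=\lim_nH_n^i$, $H_{min}^i:=\inf_{n\ge1}H_n^i$. Puiseux exponent: $\gamma:=\min\{\tfrac12(H_\infty^1+H_\infty^0),\ H_{min}^0+H_\infty^1,\ H_{min}^1+H_\infty^0\}$. $\lambda_\beta$ is the eigenvalue of the unique positive continuous eigenfunction of $\mathcal L_\beta[\Phi](x)=e^{-\beta H(0x)}\Phi(0x)+e^{-\beta H(1x)}\Phi(1x)$ (one has $\lambda_\beta>1$). $F_\beta^i(\lambda):=\sum_{k\ge1}\lambda^{-k}e^{-\beta H_k^i}$, $\tilde F_\beta^i(\lambda):=\sum_{k\ge1}k\lambda^{-k}e^{-\beta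 H_k^i}$. *)

(* Defs.v *)
From Stdlib Require Import Reals Lra ClassicalEpsilon.
Open Scope R_scope.

(** The full shift Sigma = {0,1}^N, with 0 = false, 1 = true. *)
Definition Sigma := nat -> bool.

Definition cons_sym (a : bool) (x : Sigma) : Sigma :=
  fun i => match i with O => a | S j => x j end.

Definition agree (n : nat) (x y : Sigma) : Prop :=
  forall i, (i <= n)%nat -> x i = y i.

Definition continuous_Sigma (f : Sigma -> R) : Prop :=
  forall x eps, 0 < eps -> exists n, forall y, agree n x y -> Rabs (f x - f y) < eps.

(** Sum of a series (classically chosen; 0 if it does not converge). *)
Definition series (f : nat -> R) : R :=
  match excluded_middle_informative (exists l, infinite_sum f l) with
  | left h => proj1_sig (constructive_indefinite_description _ h)
  | right _ => 0
  end.

(** Summable variation: var_{n+1}(H) := sup{|H x - H y| : x,y agree on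
    x_0..x_n} is summable; equivalently, it is dominated by a summable
    sequence. *)
Definition summable_variation (H : Sigma -> R) : Prop :=
  exists v : nat -> R,
    (forall n x y, agree n x y -> Rabs (H x - H y) <= v n) /\
    (exists l, infinite_sum v l).

(** Reduced double-well type potential, with H0 n = H_n^0 and H1 n = H_n^1
    (values at n = 0 are irrelevant). *)
Definition reduced_double_well (H : Sigma -> R) (H0 H1 : nat -> R) : Prop :=
  continuous_Sigma H /\
  (forall x, 0 <= H x) /\
  summable_variation H /\
  (forall x, x 0%nat = x 1%nat -> H x = 0) /\
  (forall n, (1 <= n)%nat -> 0 < H0 n /\
     forall x, x 0%nat = false -> (forall i, (1 <= i <= n)%nat -> x i = true) ->
               x (S n) = false -> H x = H0 n) /\
  (forall n, (1 <= n)%nat -> 0 < H1 n /\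
     forall x, x 0%nat = true -> (forall i, (1 <= i <= n)%nat -> x i = false) ->
               x (S n) = true -> H x = H1 n) /\
  (exists w : nat -> R,
     (forall k n, (1 <= k)%nat -> Rabs (H0 k - H0 (k + n)%nat) <= w k) /\
     (exists l, infinite_sum w l)) /\
  (exists w : nat -> R,
     (forall k n, (1 <= k)%nat -> Rabs (H1 k - H1 (k + n)%nat) <= w k) /\
     (exists l, infinite_sum w l)).

Definition is_inf_from1 (u : nat -> R) (m : R) : Prop :=
  (forall n, (1 <= n)%nat -> m <= u n) /\
  (forall m', (forall n, (1 <= n)%nat -> m' <= u n) -> m' <= m).

Definition puiseux_gamma (Hinf0 Hinf1 Hmin0 Hmin1 : R) : R :=
  Rmin (Rmin ((Hinf1 + Hinf0) / 2) (Hmin0 + Hinf1)) (Hmin1 + Hinf0).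

Definition transfer (H : Sigma -> R) (beta : R) (Phi : Sigma -> R) (x : Sigma) : R :=
  exp (- beta * H (cons_sym false x)) * Phi (cons_sym false x)
  + exp (- beta * H (cons_sym true x)) * Phi (cons_sym true x).

Definition is_pos_cont_eigenvalue (H : Sigma -> R) (beta lam : R) : Prop :=
  exists Phi : Sigma -> R,
    continuous_Sigma Phi /\ (forall x, 0 < Phi x) /\
    (forall x, transfer H beta Phi x = lam * Phi x).

Definition Fbeta (Hi : nat -> R) (beta lam : R) : R :=
  series (fun n => / lam ^ (S n) * exp (- beta * Hi (S n))).

Definition Ftilde (Hi : nat -> R) (beta lam : R) : R :=
  series (fun n => INR (S n) * / lam ^ (S n) * exp (- beta * Hi (S n))).

Definition cv_at_infty (g : R -> R) (L : R) : Prop :=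
  forall eps, 0 < eps -> exists B, forall beta, B < beta -> Rabs (g beta - L) < eps.

(* Main.v *)
Require Import Defs.
From Stdlib Require Import Reals Lra Lia Classical ClassicalEpsilon FunctionalExtensionality ZArith.
Open Scope R_scope.


Definition ext (f : Sigma) (n : nat) (b : bool) : Sigma :=
  fun i => if Nat.ltb i n then f i else b.

Definition cyl (f : Sigma) (n : nat) (x : Sigma) : Prop := forall i, (i < n)%nat -> x i = f i.

Section Koenig.
Variable Bad : Sigma -> nat -> Prop.
Hypothesis Bad_compat : forall f g n, (forall i, (i < n)%nat -> f i = g i) -> Bad f n -> Bad g n.
Hypothesis Bad_split : forall f n, Bad f n -> Bad (ext f n false) (S n) \/ Bad (ext f n true) (S n).

Fixpoint gpath (n : nat) : Sigma :=
  match n with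
  | O => fun _ => false
  | S m => ext (gpath m) m
      (if excluded_middle_informative (Bad (ext (gpath m) m false) (S m)) then false else true)
  end.

Lemma gpath_bad : Bad (gpath 0) 0 -> forall n, Bad (gpath n) n.
Proof.
  intros H0 n; induction n as [|n IH]; auto.
  simpl. destruct (excluded_middle_informative _) as [h|h]; auto.
  destruct (Bad_split _ _ IH); tauto.
Qed.

Lemma gpath_stable : forall n i, (i < n)%nat -> gpath n i = gpath (S i) i.
Proof.
  intros n; induction n as [|n IH]; intros i Hi; [lia|].
  destruct (Nat.eq_dec i n) as [->|Hne]; [reflexivity|].
  simpl gpath at 1. unfold ext at 1.
  replace (Nat.ltb i n) with true by (symmetry; apply Nat.ltb_lt; lia).
  apply IH; lia.
Qed.

Lemma koenig : Bad (gpath 0) 0 -> exists p, forall n, Bad p n.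
Proof.
  intros H0. exists (fun i => gpath (S i) i). intros n.
  apply (Bad_compat (gpath n)); [|apply gpath_bad; auto].
  intros i Hi. apply gpath_stable; auto.
Qed.
End Koenig.

Lemma cont_bounded_above (f : Sigma -> R) :
  continuous_Sigma f -> exists M, forall x, f x <= M.
Proof.
  intros Hc. apply NNPP; intros Hno.
  set (Bad := fun g n => forall M, exists x, cyl g n x /\ M < f x).
  assert (Hb0 : Bad (gpath Bad 0) 0%nat).
  { intros M. apply NNPP; intros H. apply Hno. exists M. intros x.
    apply Rnot_lt_le. intros Hl. apply H. exists x. split; auto. intros i Hi; lia. }
  destruct (koenig Bad) as [p Hp]; auto.
  - intros g h n Hgh Hg M. destruct (Hg M) as [x [Hx1 Hx2]]. exists x; split; auto.
    intros i Hi. rewrite Hx1; auto.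
  - intros g n Hg. apply NNPP; intros H. apply not_or_and in H. destruct H as [H1 H2].
    apply not_all_ex_not in H1. destruct H1 as [M1 H1].
    apply not_all_ex_not in H2. destruct H2 as [M2 H2].
    destruct (Hg (Rmax M1 M2)) as [x [Hx1 Hx2]].
    destruct (x n) eqn:E.
    + apply H2. exists x. split; [|generalize (Rmax_r M1 M2); lra].
      intros i Hi. unfold ext. destruct (Nat.ltb i n) eqn:E2.
      * apply Hx1. apply Nat.ltb_lt; auto.
      * apply Nat.ltb_ge in E2. replace i with n by lia. auto.
    + apply H1. exists x. split; [|generalize (Rmax_l M1 M2); lra].
      intros i Hi. unfold ext. destruct (Nat.ltb i n) eqn:E2.
      * apply Hx1. apply Nat.ltb_lt; auto.
      * apply Nat.ltb_ge in E2. replace i with n by lia. auto.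
  - destruct (Hc p 1 Rlt_0_1) as [n Hn].
    destruct (Hp (S n) (f p + 1)) as [x [Hx1 Hx2]].
    assert (Ha : agree n p x). { intros i Hi. symmetry. apply Hx1. lia. }
    specialize (Hn x Ha). apply Rabs_def2 in Hn. lra.
Qed.

Lemma cont_pos_bounded_below (f : Sigma -> R) :
  continuous_Sigma f -> (forall x, 0 < f x) -> exists m, 0 < m /\ forall x, m <= f x.
Proof.
  intros Hc Hpos. apply NNPP; intros Hno.
  set (Bad := fun g n => forall e, 0 < e -> exists x, cyl g n x /\ f x < e).
  assert (Hb0 : Bad (gpath Bad 0) 0%nat).
  { intros e He. apply NNPP; intros H. apply Hno. exists e. split; auto. intros x.
    apply Rnot_lt_le. intros Hl. apply H. exists x. split; auto. intros i Hi; lia. }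
  destruct (koenig Bad) as [p Hp]; auto.
  - intros g h n Hgh Hg e He. destruct (Hg e He) as [x [Hx1 Hx2]]. exists x; split; auto.
    intros i Hi. rewrite Hx1; auto.
  - intros g n Hg. apply NNPP; intros H. apply not_or_and in H. destruct H as [H1 H2].
    apply not_all_ex_not in H1. destruct H1 as [e1 H1].
    apply imply_to_and in H1. destruct H1 as [He1 H1].
    apply not_all_ex_not in H2. destruct H2 as [e2 H2].
    apply imply_to_and in H2. destruct H2 as [He2 H2].
    destruct (Hg (Rmin e1 e2)) as [x [Hx1 Hx2]]. { apply Rmin_pos; auto. }
    destruct (x n) eqn:E.
    + apply H2. exists x. split; [|generalize (Rmin_r e1 e2); lra].
      intros i Hi. unfold ext. destruct (Nat.ltb i n) eqn:E2.
      * apply Hx1. apply Nat.ltb_lt; auto.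
      * apply Nat.ltb_ge in E2. replace i with n by lia. auto.
    + apply H1. exists x. split; [|generalize (Rmin_l e1 e2); lra].
      intros i Hi. unfold ext. destruct (Nat.ltb i n) eqn:E2.
      * apply Hx1. apply Nat.ltb_lt; auto.
      * apply Nat.ltb_ge in E2. replace i with n by lia. auto.
  - assert (Hp0 := Hpos p).
    destruct (Hc p (f p / 2)) as [n Hn]; [lra|].
    destruct (Hp (S n) (f p / 2)) as [x [Hx1 Hx2]]; [lra|].
    assert (Ha : agree n p x). { intros i Hi. symmetry. apply Hx1. lia. }
    specialize (Hn x Ha). apply Rabs_def2 in Hn. lra.
Qed.


Lemma series_eq a l : infinite_sum a l -> series a = l.
Proof.
  intros H. unfold series. destruct (excluded_middle_informative _) as [h|h].
  - destruct (constructive_indefinite_description _ h) as [l' Hl']. simpl.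
    eapply uniqueness_sum; eauto.
  - exfalso; apply h; eauto.
Qed.

Lemma sum_growing a : (forall n, 0 <= a n) -> Un_growing (sum_f_R0 a).
Proof. intros H n. simpl. generalize (H (S n)); lra. Qed.

Lemma nonneg_cv a B : (forall n, 0 <= a n) -> (forall N, sum_f_R0 a N <= B) ->
  infinite_sum a (series a).
Proof.
  intros Ha HB.
  destruct (growing_cv (sum_f_R0 a)) as [l Hl].
  - apply sum_growing; auto.
  - exists B. intros x [n ->]. auto.
  - rewrite (series_eq a l); exact Hl.
Qed.

Lemma partial_le a l : (forall n, 0 <= a n) -> infinite_sum a l -> forall N, sum_f_R0 a N <= l.
Proof. intros Ha Hl N. apply (growing_ineq (sum_f_R0 a)); auto. apply sum_growing; auto. Qed.

Lemma lim_le a l B : infinite_sum a l -> (forall N, sum_f_R0 a N <= B) -> l <= B.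
Proof.
  intros Hl HB. apply Rnot_lt_le; intros Hlt.
  destruct (Hl (l - B)) as [N HN]; [lra|].
  specialize (HN N (le_n N)). specialize (HB N). unfold Rdist in HN.
  apply Rabs_def2 in HN. lra.
Qed.

Lemma sum_nonneg a N : (forall n, 0 <= a n) -> 0 <= sum_f_R0 a N.
Proof. intros Ha; induction N; simpl; [apply Ha|]. generalize (Ha (S N)); lra. Qed.

Lemma sum_ge_term a N : (forall n, 0 <= a n) -> a N <= sum_f_R0 a N.
Proof. intros Ha. destruct N; simpl; [lra|]. generalize (sum_nonneg a N Ha); lra. Qed.

Lemma sum_le a b N : (forall n, a n <= b n) -> sum_f_R0 a N <= sum_f_R0 b N.
Proof. intros H; induction N; simpl; [apply H|]. generalize (H (S N)); lra. Qed.

Lemma sum_plus a b N : sum_f_R0 (fun n => a n + b n) N = sum_f_R0 a N + sum_f_R0 b N.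
Proof. induction N; simpl; lra. Qed.

Lemma sum_scal a c N : sum_f_R0 (fun n => a n * c) N = sum_f_R0 a N * c.
Proof. induction N; simpl; [lra|]. rewrite IHN; ring. Qed.

Lemma sum_shift_ge a M N c : (forall n, 0 <= a n) ->
  (forall n, (M < n <= M + N)%nat -> c <= a n) ->
  sum_f_R0 a M + INR N * c <= sum_f_R0 a (M + N).
Proof.
  intros Ha Hc. induction N.
  - rewrite Nat.add_0_r. simpl. lra.
  - replace (M + S N)%nat with (S (M + N)) by lia. simpl sum_f_R0 at 2.
    rewrite S_INR.
    assert (c <= a (S (M + N))) by (apply Hc; lia).
    assert (sum_f_R0 a M + INR N * c <= sum_f_R0 a (M + N)).
    { apply IHN. intros n Hn; apply Hc; lia. }
    lra.
Qed.

Lemma sum_indic K c N : 0 <= c ->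
  sum_f_R0 (fun n => if Nat.ltb (S n) K then c else 0) N <= INR K * c.
Proof.
  intros Hc. assert (H : forall N, sum_f_R0 (fun n => if Nat.ltb (S n) K then c else 0) N
     <= INR (Nat.min (S N) K) * c).
  { induction N0.
    - simpl sum_f_R0. destruct (Nat.ltb 1 K) eqn:E.
      + apply Nat.ltb_lt in E. replace (Nat.min 1 K) with 1%nat by lia. simpl INR; lra.
      + apply Rmult_le_pos; [apply pos_INR|lra].
    - simpl sum_f_R0. destruct (Nat.ltb (S (S N0)) K) eqn:E.
      + apply Nat.ltb_lt in E. replace (Nat.min (S (S N0)) K) with (S (S N0)) by lia.
        replace (Nat.min (S N0) K) with (S N0) in IHN0 by lia.
        rewrite (S_INR (S N0)). lra.
      + assert (INR (Nat.min (S N0) K) <= INR (Nat.min (S (S N0)) K)) by (apply le_INR; lia).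
        assert (INR (Nat.min (S N0) K) * c <= INR (Nat.min (S (S N0)) K) * c)
          by (apply Rmult_le_compat_r; auto). lra. }
  eapply Rle_trans; [apply H|]. apply Rmult_le_compat_r; auto. apply le_INR; lia.
Qed.

Lemma geom_sum x N : x <> 1 -> sum_f_R0 (fun n => x ^ S n) N = x * (1 - x ^ S N) / (1 - x).
Proof.
  intros Hx. assert (1 - x <> 0) by lra.
  induction N.
  - simpl. field; auto.
  - rewrite tech5, IHN. simpl. field; auto.
Qed.

Lemma geom_bound x N : 0 <= x < 1 -> sum_f_R0 (fun n => x ^ S n) N <= x / (1 - x).
Proof.
  intros Hx. rewrite geom_sum by lra.
  assert (0 <= x ^ S N) by (apply pow_le; lra).
  unfold Rdiv. apply Rmult_le_compat_r. { apply Rlt_le, Rinv_0_lt_compat; lra. }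
  assert (0 <= x) by lra. nra.
Qed.

Lemma ngeom_sum x N : x <> 1 ->
  sum_f_R0 (fun n => INR (S n) * x ^ S n) N =
  x * (1 - INR (S (S N)) * x ^ S N + INR (S N) * x ^ S (S N)) / ((1 - x) * (1 - x)).
Proof.
  intros Hx. assert (1 - x <> 0) by lra.
  induction N.
  - simpl. field; auto.
  - rewrite tech5, IHN.
    rewrite !S_INR. simpl pow. field; auto.
Qed.

Lemma ngeom_bound x N : 0 <= x < 1 ->
  sum_f_R0 (fun n => INR (S n) * x ^ S n) N <= x / ((1 - x) * (1 - x)).
Proof.
  intros Hx. rewrite ngeom_sum by lra.
  assert (0 <= x ^ S N) by (apply pow_le; lra).
  unfold Rdiv. apply Rmult_le_compat_r.
  { apply Rlt_le, Rinv_0_lt_compat. apply Rmult_lt_0_compat; lra. }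
  assert (0 <= x) by lra. rewrite !S_INR. replace (x ^ S (S N)) with (x * x ^ S N) by (simpl; ring).
  assert (0 <= INR N) by apply pos_INR.
  set (y := x ^ S N) in *. 
  assert (x * y <= y) by nra.
  assert ((INR N + 1) * (x * y) <= (INR N + 1 + 1) * y) by nra.
  assert (0 <= x * ((INR N + 1 + 1) * y - (INR N + 1) * (x * y))) by (apply Rmult_le_pos; lra).
  nra.
Qed.


Fixpoint rep (b : bool) (j : nat) (z : Sigma) : Sigma :=
  match j with O => z | S j' => cons_sym b (rep b j' z) end.

Lemma rep_spec b j z i : rep b j z i = if Nat.ltb i j then b else z (i - j)%nat.
Proof.
  revert i; induction j; intros i.
  - simpl. rewrite Nat.sub_0_r. reflexivity.
  - simpl. unfold cons_sym. destruct i; [reflexivity|].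
    rewrite IHj. simpl. reflexivity.
Qed.

Lemma rep_0 b j z : z 0%nat = b -> rep b j z 0%nat = b.
Proof. intros. rewrite rep_spec. destruct j; simpl; auto. Qed.

Lemma pow_inv_lim lam X Y M : 1 < lam -> (forall J, X <= Y + / lam ^ (S J) * M) -> X <= Y.
Proof.
  intros Hl H. apply Rnot_lt_le; intros Hlt.
  assert (Hm : 0 < Rabs M + 1) by (generalize (Rabs_pos M); lra).
  destruct (pow_lt_1_zero (/ lam)) with (y := (X - Y) / (Rabs M + 1)) as [N HN].
  { rewrite Rabs_pos_eq by (apply Rlt_le, Rinv_0_lt_compat; lra).
    rewrite <- Rinv_1. apply Rinv_lt_contravar; lra. }
  { apply Rdiv_lt_0_compat; lra. }
  specialize (HN (S N) (le_S _ _ (le_n N))). specialize (H N).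
  rewrite pow_inv in HN. 
  assert (Hp : 0 < / lam ^ S N) by (apply Rinv_0_lt_compat, pow_lt; lra).
  rewrite Rabs_pos_eq in HN by lra.
  assert (/ lam ^ S N * M <= / lam ^ S N * (Rabs M + 1)).
  { apply Rmult_le_compat_l; [lra|]. generalize (Rle_abs M); lra. }
  assert (/ lam ^ S N * (Rabs M + 1) < X - Y).
  { apply (Rmult_lt_compat_r (Rabs M + 1)) in HN; [|lra].
    unfold Rdiv in HN. rewrite Rmult_assoc, Rinv_l in HN by lra. lra. }
  lra.
Qed.

Section Eig.
Variables (H : Sigma -> R) (beta lam : R) (Phi : Sigma -> R).
Hypothesis Heig : forall x, transfer H beta Phi x = lam * Phi x.
Hypothesis Hpos : forall x, 0 < Phi x.
Hypothesis Hzero : forall x, x 0%nat = x 1%nat -> H x = 0.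

Lemma lam_gt_1 : 1 < lam.
Proof.
  set (x0 := fun _ : nat => false).
  assert (E : cons_sym false x0 = x0).
  { apply functional_extensionality; intros [|i]; reflexivity. }
  generalize (Heig x0). unfold transfer. rewrite E.
  rewrite (Hzero x0) by reflexivity. rewrite Rmult_0_r, exp_0, Rmult_1_l.
  intros Hq.
  assert (0 < exp (- beta * H (cons_sym true x0)) * Phi (cons_sym true x0)).
  { apply Rmult_lt_0_compat; [apply exp_pos|apply Hpos]. }
  generalize (Hpos x0); intros. nra.
Qed.


Lemma recur b z (E : nat -> R) j :
  z 0%nat = b ->
  exp (- beta * H (cons_sym (negb b) (rep b j z))) = E j ->
  lam * Phi (rep b j z) = E j * Phi (cons_sym (negb b) (rep b j z)) + Phi (rep b (S j) z).
Proof.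
  intros Hz HE. rewrite <- Heig. unfold transfer.
  assert (H0 : H (cons_sym b (rep b j z)) = 0).
  { apply Hzero. simpl. rewrite rep_0; auto. }
  simpl rep.
  destruct b; simpl in *; rewrite H0, Rmult_0_r, exp_0, HE; ring.
Qed.

Lemma expand b z (E : nat -> R) :
  (forall j, lam * Phi (rep b j z) = E j * Phi (cons_sym (negb b) (rep b j z)) + Phi (rep b (S j) z)) ->
  forall J, Phi z = sum_f_R0 (fun j => / lam ^ (S j) * E j * Phi (cons_sym (negb b) (rep b j z))) J
                    + / lam ^ (S J) * Phi (rep b (S J) z).
Proof.
  intros Hr. assert (Hl := lam_gt_1). induction J.
  - simpl sum_f_R0. specialize (Hr 0%nat). simpl rep in *. simpl pow.
    rewrite Rmult_1_r. apply (Rmult_eq_reg_l lam); [|lra].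
    rewrite Hr. field. lra.
  - rewrite tech5. rewrite IHJ. specialize (Hr (S J)).
    assert (Hp : lam ^ S J <> 0) by (apply pow_nonzero; lra).
    replace (Phi (rep b (S J) z)) with (/ lam * (lam * Phi (rep b (S J) z))) by (field; lra).
    rewrite Hr. simpl pow. field. split; [apply pow_nonzero|]; lra.
Qed.

End Eig.


Definition Fterm (Hc : nat -> R) (beta lam : R) (n : nat) : R :=
  / lam ^ (S n) * exp (- beta * Hc (S n)).

Lemma exp_le_1 a : 0 <= a -> exp (- a) <= 1.
Proof.
  intros Ha. destruct (Req_dec a 0) as [->|Hne].
  - rewrite Ropp_0, exp_0; lra.
  - rewrite <- exp_0. left. apply exp_increasing. lra.
Qed.

Lemma inv_pow_pos lam n : 0 < lam -> 0 < / lam ^ n.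
Proof. intros. apply Rinv_0_lt_compat, pow_lt; auto. Qed.

Lemma Fterm_nonneg Hc beta lam n : 0 < lam -> 0 <= Fterm Hc beta lam n.
Proof. intros. unfold Fterm. apply Rmult_le_pos; [left; apply inv_pow_pos; auto|left; apply exp_pos]. Qed.

Lemma Fterm_le Hc beta lam n : 0 < lam -> 0 <= beta * Hc (S n) -> Fterm Hc beta lam n <= (/ lam) ^ S n.
Proof.
  intros Hl Hb. unfold Fterm. rewrite pow_inv.
  assert (exp (- beta * Hc (S n)) <= 1).
  { replace (- beta * Hc (S n)) with (- (beta * Hc (S n))) by ring. apply exp_le_1; auto. }
  assert (0 < / lam ^ S n) by (apply inv_pow_pos; auto).
  nra.
Qed.

Lemma inv_ratio lam : 1 < lam -> / lam / (1 - / lam) = / (lam - 1).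
Proof. intros. field. lra. Qed.

Lemma Fbeta_cv Hc beta lam : 1 < lam -> (forall n, 0 <= beta * Hc (S n)) ->
  infinite_sum (Fterm Hc beta lam) (Fbeta Hc beta lam) /\
  0 <= Fbeta Hc beta lam <= / (lam - 1).
Proof.
  intros Hl Hb.
  assert (Hx : 0 <= / lam < 1).
  { split; [left; apply Rinv_0_lt_compat; lra|]. rewrite <- Rinv_1. apply Rinv_lt_contravar; lra. }
  assert (HB : forall N, sum_f_R0 (Fterm Hc beta lam) N <= / (lam - 1)).
  { intros N. rewrite <- inv_ratio by auto. eapply Rle_trans; [|apply geom_bound; auto].
    apply sum_le. intros n. apply Fterm_le; auto; lra. }
  assert (Hcv : infinite_sum (Fterm Hc beta lam) (Fbeta Hc beta lam)).
  { unfold Fbeta. apply (nonneg_cv _ (/ (lam - 1))); auto. intros; apply Fterm_nonneg; lra. }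
  split; auto. split.
  - eapply Rle_trans; [|apply (partial_le _ _ (fun n => Fterm_nonneg Hc beta lam n ltac:(lra)) Hcv 0%nat)].
    apply sum_nonneg. intros; apply Fterm_nonneg; lra.
  - eapply lim_le; eauto.
Qed.

Lemma upper_exp lam X (a p q : nat -> R) F B M :
  1 < lam -> (forall J, X = sum_f_R0 (fun j => a j * p j) J + / lam ^ (S J) * q J) ->
  (forall j, 0 <= a j) -> infinite_sum a F -> (forall j, p j <= B) -> 0 <= B ->
  (forall J, q J <= M) -> X <= F * B.
Proof.
  intros Hl HX Ha HF Hp HB Hq. apply (pow_inv_lim lam X (F * B) M Hl). intros J.
  rewrite (HX J).
  assert (sum_f_R0 (fun j => a j * p j) J <= sum_f_R0 a J * B).
  { rewrite <- sum_scal. apply sum_le. intros n. apply Rmult_le_compat_l; auto. }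
  assert (sum_f_R0 a J * B <= F * B).
  { apply Rmult_le_compat_r; auto. apply partial_le; auto. }
  assert (/ lam ^ S J * q J <= / lam ^ S J * M).
  { apply Rmult_le_compat_l; auto. left; apply inv_pow_pos; lra. }
  lra.
Qed.

Lemma lower_exp lam X (a p q : nat -> R) F A :
  1 < lam -> (forall J, X = sum_f_R0 (fun j => a j * p j) J + / lam ^ (S J) * q J) ->
  (forall j, 0 <= a j) -> infinite_sum a F -> (forall j, A <= p j) -> 0 <= A ->
  (forall J, 0 <= q J) -> A * F <= X.
Proof.
  intros Hl HX Ha HF Hp HA Hq.
  assert (HJ : forall J, sum_f_R0 a J * A <= X).
  { intros J. rewrite (HX J). rewrite <- sum_scal.
    assert (sum_f_R0 (fun n => a n * A) J <= sum_f_R0 (fun j => a j * p j) J).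
    { apply sum_le. intros n. apply Rmult_le_compat_l; auto. }
    assert (0 <= / lam ^ S J * q J).
    { apply Rmult_le_pos; auto. left; apply inv_pow_pos; lra. }
    lra. }
  destruct (Req_dec A 0) as [->|HA0].
  - generalize (HJ 0%nat). rewrite Rmult_0_r. lra.
  - apply Rnot_lt_le; intros Hlt.
    destruct (HF ((A * F - X) / A)) as [N HN].
    { apply Rdiv_lt_0_compat; lra. }
    specialize (HN N (le_n N)). unfold Rdist in HN. apply Rabs_def2 in HN.
    specialize (HJ N).
    assert (Hpos : 0 < A) by lra.
    destruct HN as [HN1 HN2].
    assert (A * (F - sum_f_R0 a N) < A * ((A * F - X) / A)) by (apply Rmult_lt_compat_l; lra).
    replace (A * ((A * F - X) / A)) with (A * F - X) in H by (field; lra).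
    lra.
Qed.

Section Key.
Variables (H : Sigma -> R) (H0 H1 : nat -> R) (beta lam : R) (Phi : Sigma -> R).
Hypothesis Heig : forall x, transfer H beta Phi x = lam * Phi x.
Hypothesis Hpos : forall x, 0 < Phi x.
Hypothesis Hcont : continuous_Sigma Phi.
Hypothesis Hzero : forall x, x 0%nat = x 1%nat -> H x = 0.
Hypothesis Hrun0 : forall n, (1 <= n)%nat ->
     forall x, x 0%nat = false -> (forall i, (1 <= i <= n)%nat -> x i = true) ->
               x (S n) = false -> H x = H0 n.
Hypothesis Hrun1 : forall n, (1 <= n)%nat ->
     forall x, x 0%nat = true -> (forall i, (1 <= i <= n)%nat -> x i = false) ->
               x (S n) = true -> H x = H1 n.
Hypothesis Hb0 : forall n, 0 <= beta * H0 (S n).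
Hypothesis Hb1 : forall n, 0 <= beta * H1 (S n).

Lemma H_run b (Hc : nat -> R) z j :
  (forall n, (1 <= n)%nat ->
     forall x, x 0%nat = negb b -> (forall i, (1 <= i <= n)%nat -> x i = b) ->
               x (S n) = negb b -> H x = Hc n) ->
  z 0%nat = b -> z 1%nat = negb b -> H (cons_sym (negb b) (rep b j z)) = Hc (S j).
Proof.
  intros Hr Hz0 Hz1. apply Hr; [lia|reflexivity| |].
  - intros i Hi. destruct i; [lia|]. simpl. rewrite rep_spec.
    destruct (Nat.ltb i j) eqn:E; auto. apply Nat.ltb_ge in E.
    replace (i - j)%nat with 0%nat by lia. auto.
  - simpl. rewrite rep_spec. replace (Nat.ltb (S j) j) with false by (symmetry; apply Nat.ltb_ge; lia).
    replace (S j - j)%nat with 1%nat by lia. auto.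
Qed.

Lemma expand_F b (Hc : nat -> R) z :
  (forall n, (1 <= n)%nat ->
     forall x, x 0%nat = negb b -> (forall i, (1 <= i <= n)%nat -> x i = b) ->
               x (S n) = negb b -> H x = Hc n) ->
  z 0%nat = b -> z 1%nat = negb b ->
  forall J, Phi z = sum_f_R0 (fun j => Fterm Hc beta lam j * Phi (cons_sym (negb b) (rep b j z))) J
                    + / lam ^ (S J) * Phi (rep b (S J) z).
Proof.
  intros Hr Hz0 Hz1 J.
  assert (Hrec : forall j, lam * Phi (rep b j z) = exp (- beta * Hc (S j)) * Phi (cons_sym (negb b) (rep b j z)) + Phi (rep b (S j) z)).
  { intros j. apply (recur H beta lam Phi Heig Hzero b z (fun j => exp (- beta * Hc (S j))) j). all: try auto. rewrite (H_run b Hc z j); auto. }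
  rewrite (expand H beta lam Phi Heig Hpos Hzero b z (fun j => exp (- beta * Hc (S j))) Hrec J).
  reflexivity.
Qed.

Definition Cset (y : Sigma) := y 0%nat = true /\ y 1%nat = false.

Lemma key_identity : Fbeta H0 beta lam * Fbeta H1 beta lam = 1.
Proof.
  assert (Hl : 1 < lam) by (apply (lam_gt_1 H beta lam Phi); auto).
  destruct (cont_bounded_above Phi Hcont) as [M HM].
  destruct (cont_pos_bounded_below Phi Hcont Hpos) as [m [Hm0 Hm]].
  destruct (Fbeta_cv H0 beta lam Hl Hb0) as [HF0 [HF0a HF0b]].
  destruct (Fbeta_cv H1 beta lam Hl Hb1) as [HF1 [HF1a HF1b]].
  set (F0 := Fbeta H0 beta lam) in *. set (F1 := Fbeta H1 beta lam) in *.
  set (zk := fun y k => cons_sym false (rep true k y)).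
  assert (Hz : forall y, Cset y -> forall k, zk y k 0%nat = false /\ zk y k 1%nat = true).
  { intros y [Hy0 Hy1] k. split; [reflexivity|]. simpl. apply rep_0; auto. }
  assert (Hyk : forall y, Cset y -> forall k j, Cset (cons_sym true (rep false j (zk y k)))).
  { intros y Hy k j. split; [reflexivity|]. simpl. apply rep_0. apply Hz; auto. }
  assert (Ey : forall y, Cset y -> forall J, Phi y =
      sum_f_R0 (fun j => Fterm H0 beta lam j * Phi (zk y j)) J + / lam ^ (S J) * Phi (rep true (S J) y)).
  { intros y [Hy0 Hy1] J. apply (expand_F true H0 y); auto. }
  assert (Ez : forall y, Cset y -> forall k J, Phi (zk y k) =
      sum_f_R0 (fun j => Fterm H1 beta lam j * Phi (cons_sym true (rep false j (zk y k)))) J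
      + / lam ^ (S J) * Phi (rep false (S J) (zk y k))).
  { intros y Hy k J. destruct (Hz y Hy k). apply (expand_F false H1 (zk y k)); auto. }
  set (E1 := fun r => exists y, Cset y /\ r = Phi y).
  assert (Hy0 : Cset (fun i => match i with O => true | _ => false end)) by (split; reflexivity).
  destruct (completeness E1) as [bs [Hbs1 Hbs2]].
  { exists M. intros r [y [_ ->]]. auto. }
  { eexists; exists (fun i => match i with O => true | _ => false end); split; eauto. }
  assert (Hbpos : 0 < bs).
  { eapply Rlt_le_trans; [apply (Hpos (fun i => match i with O => true | _ => false end))|].
    apply Hbs1. eexists; split; eauto. }
  assert (Hup : forall y, Cset y -> Phi y <= F0 * (F1 * bs)).
  { intros y Hy. apply (upper_exp lam (Phi y) (Fterm H0 beta lam) (fun j => Phi (zk y j))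
      (fun J => Phi (rep true (S J) y)) F0 (F1 * bs) M); auto.
    - intros; apply Fterm_nonneg; lra.
    - intros k. apply (upper_exp lam _ (Fterm H1 beta lam) (fun j => Phi (cons_sym true (rep false j (zk y k))))
        (fun J => Phi (rep false (S J) (zk y k))) F1 bs M); auto.
      + intros; apply Fterm_nonneg; lra.
      + intros j. apply Hbs1. exists (cons_sym true (rep false j (zk y k))). split; [apply Hyk; exact Hy|reflexivity].
      + lra.
    - apply Rmult_le_pos; lra. }
  assert (HS1 : 1 <= F0 * F1).
  { assert (bs <= F0 * (F1 * bs)).
    { apply Hbs2. intros r [y [Hy ->]]. auto. }
    apply Rnot_lt_le; intros Hlt.
    assert (F0 * F1 * bs < 1 * bs) by (apply Rmult_lt_compat_r; lra). nra. }
  set (E2 := fun r => exists y, Cset y /\ r = - Phi y).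
  destruct (completeness E2) as [ns [Hns1 Hns2]].
  { exists (- m). intros r [y [_ ->]]. generalize (Hm y); lra. }
  { eexists; exists (fun i => match i with O => true | _ => false end); split; eauto. }
  set (a := - ns).
  assert (Ha : forall y, Cset y -> a <= Phi y).
  { intros y Hy. unfold a. assert (- Phi y <= ns) by (apply Hns1; eexists; split; eauto). lra. }
  assert (Hapos : m <= a).
  { unfold a. assert (ns <= - m). { apply Hns2. intros r [y [_ ->]]. generalize (Hm y); lra. } lra. }
  assert (Hlo : forall y, Cset y -> (a * F1) * F0 <= Phi y).
  { intros y Hy. apply (lower_exp lam (Phi y) (Fterm H0 beta lam) (fun j => Phi (zk y j))
      (fun J => Phi (rep true (S J) y)) F0 (a * F1)); auto.
    all: try (intros; apply Fterm_nonneg; lra).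
    all: try (intros; left; apply Hpos).
    all: try (apply Rmult_le_pos; lra).
    intros k. apply (lower_exp lam _ (Fterm H1 beta lam) (fun j => Phi (cons_sym true (rep false j (zk y k))))
        (fun J => Phi (rep false (S J) (zk y k))) F1 a); auto.
    all: try (intros; apply Fterm_nonneg; lra).
    all: try (intros; left; apply Hpos).
    all: try lra.
    }
  assert (HS2 : F0 * F1 <= 1).
  { assert (ns <= - (a * F1 * F0)).
    { apply Hns2. intros r [y [Hy ->]]. generalize (Hlo y Hy); lra. }
    assert (Hq : a * (F0 * F1) <= a * 1).
    { replace (a * (F0 * F1)) with (a * F1 * F0) by ring. assert (a = - ns) by reflexivity. lra. }
    apply Rmult_le_reg_l in Hq; lra. }
  lra.
Qed.

End Key.


Lemma exp_pow x n : exp x ^ n = exp (INR n * x).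
Proof.
  induction n.
  - simpl. rewrite Rmult_0_l, exp_0. reflexivity.
  - rewrite S_INR. simpl pow. rewrite IHn. rewrite <- exp_plus. f_equal. ring.
Qed.

Lemma exp_le_mono x y : x <= y -> exp x <= exp y.
Proof. intros [H|H]; [left; apply exp_increasing; auto|subst; lra]. Qed.

Lemma choose_N d : 0 < d <= 1 -> exists N : nat, / d <= INR N /\ INR N * d <= 2.
Proof.
  intros Hd. destruct (archimed (/ d)) as [H1 H2].
  assert (Hi : 0 < / d) by (apply Rinv_0_lt_compat; lra).
  assert (Hz : (0 <= up (/ d))%Z) by (apply le_IZR; lra).
  exists (Z.to_nat (up (/ d))).
  rewrite INR_IZR_INZ, Z2Nat.id by auto.
  split; [lra|].
  assert (IZR (up (/ d)) <= / d + 1) by lra.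
  assert (IZR (up (/ d)) * d <= (/ d + 1) * d) by (apply Rmult_le_compat_r; lra).
  replace ((/ d + 1) * d) with (1 + d) in H0 by (field; lra). lra.
Qed.

Lemma inv_pow_lower lam n : 1 < lam -> exp (- (INR n * (lam - 1))) <= / lam ^ n.
Proof.
  intros Hl. rewrite exp_Ropp. apply Rinv_le_contravar; [apply pow_lt; lra|].
  rewrite <- exp_pow. apply pow_incr. split; [lra|].
  generalize (exp_ineq1_le (lam - 1)). lra.
Qed.

Lemma half_pow lam n : 0 < lam <= 2 -> (/ 2) ^ n <= / lam ^ n.
Proof.
  intros Hl. rewrite <- pow_inv. apply pow_incr. split; [lra|].
  apply Rinv_le_contravar; lra.
Qed.

Lemma exp_mono_neg beta a b : 0 <= beta -> a <= b -> exp (- beta * b) <= exp (- beta * a).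
Proof. intros. apply exp_le_mono. nra. Qed.

Definition Ftterm (Hc : nat -> R) (beta lam : R) (n : nat) : R :=
  INR (S n) * / lam ^ (S n) * exp (- beta * Hc (S n)).

Lemma Ftterm_nonneg Hc beta lam n : 0 < lam -> 0 <= Ftterm Hc beta lam n.
Proof.
  intros. unfold Ftterm. apply Rmult_le_pos; [apply Rmult_le_pos|left; apply exp_pos].
  apply pos_INR. left; apply inv_pow_pos; auto.
Qed.

Section Bounds.
Variables (Hc : nat -> R) (Hinf Hmin : R).
Hypothesis Hp : forall n, (1 <= n)%nat -> 0 < Hc n.
Hypothesis Hcv : Un_cv Hc Hinf.
Hypothesis Hinf_ : is_inf_from1 Hc Hmin.

Lemma Hmin_nonneg : 0 <= Hmin.
Proof. apply (proj2 Hinf_). intros n Hn. left; auto. Qed.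

Lemma get_K e : 0 < e -> exists K : nat, (1 <= K)%nat /\ forall n, (K <= n)%nat -> Hinf - e < Hc n < Hinf + e.
Proof.
  intros He. destruct (Hcv e He) as [K HK]. exists (S K). split; [lia|].
  intros n Hn. specialize (HK n ltac:(lia)). unfold Rdist in HK. apply Rabs_def2 in HK. lra.
Qed.

Lemma get_k0 e : 0 < e -> exists k0 : nat, (1 <= k0)%nat /\ Hc k0 <= Hmin + e.
Proof.
  intros He. apply NNPP; intros Hn.
  assert (Hmin + e <= Hmin); [|lra].
  apply (proj2 Hinf_). intros n Hn1. apply Rnot_lt_le. intros Hlt. apply Hn.
  exists n; split; auto; lra.
Qed.

Lemma Ftilde_cv beta lam : 0 < beta -> 1 < lam ->
  infinite_sum (Ftterm Hc beta lam) (Ftilde Hc beta lam).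
Proof.
  intros Hb Hl. unfold Ftilde.
  apply (nonneg_cv _ (/ lam / ((1 - / lam) * (1 - / lam)))).
  - intros; apply Ftterm_nonneg; lra.
  - intros N. eapply Rle_trans; [|apply ngeom_bound].
    + apply sum_le. intros n. unfold Ftterm. rewrite pow_inv.
      assert (exp (- beta * Hc (S n)) <= 1).
      { replace (- beta * Hc (S n)) with (- (beta * Hc (S n))) by ring. apply exp_le_1.
        generalize (Hp (S n) ltac:(lia)); nra. }
      assert (0 <= INR (S n) * / lam ^ S n).
      { apply Rmult_le_pos; [apply pos_INR|left; apply inv_pow_pos; lra]. }
      nra.
    + split; [left; apply Rinv_0_lt_compat; lra|]. rewrite <- Rinv_1. apply Rinv_lt_contravar; lra.
Qed.

Lemma F_bounds e : 0 < e -> exists (K : nat) ca cb, 0 < ca /\ 0 < cb /\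
  forall beta lam, 0 < beta -> 1 < lam <= 2 ->
   Fbeta Hc beta lam <= INR K * exp (- beta * Hmin) + exp (- beta * (Hinf - e)) * / (lam - 1) /\
   ca * exp (- beta * (Hmin + e)) <= Fbeta Hc beta lam /\
   cb * exp (- beta * (Hinf + e)) * / (lam - 1) <= Fbeta Hc beta lam.
Proof.
  intros He. destruct (get_K e He) as [K [HK1 HK]]. destruct (get_k0 e He) as [k0 [Hk1 Hk]].
  exists K, ((/ 2) ^ k0), ((/ 2) ^ (S K) * exp (- 2)).
  split; [apply pow_lt; lra|]. split; [apply Rmult_lt_0_compat; [apply pow_lt; lra|apply exp_pos]|].
  intros beta lam Hb Hl.
  assert (Hbn : forall n, 0 <= beta * Hc (S n)).
  { intros n. generalize (Hp (S n) ltac:(lia)); nra. }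
  destruct (Fbeta_cv Hc beta lam ltac:(lra) Hbn) as [Hcv' [HF1 HF2]].
  set (F := Fbeta Hc beta lam) in *.
  assert (Hnn : forall n, 0 <= Fterm Hc beta lam n) by (intros; apply Fterm_nonneg; lra).
  assert (HHmin : forall n, Hmin <= Hc (S n)) by (intros; apply (proj1 Hinf_); lia).
  split; [|split].
  -
    apply (lim_le _ _ _ Hcv'). intros N.
    set (x := / lam).
    assert (Hx : 0 <= x < 1).
    { split; [left; apply Rinv_0_lt_compat; lra|]. rewrite <- Rinv_1. apply Rinv_lt_contravar; lra. }
    eapply Rle_trans.
    { apply (sum_le _ (fun n => (if Nat.ltb (S n) K then exp (- beta * Hmin) else 0)
                                + exp (- beta * (Hinf - e)) * x ^ S n)).
      intros n. unfold Fterm. fold x. rewrite <- pow_inv. fold x.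
      assert (Hxp : 0 <= x ^ S n <= 1).
      { split; [apply pow_le; lra|]. rewrite <- (pow1 (S n)). apply pow_incr; lra. }
      assert (0 <= exp (- beta * (Hinf - e)) * x ^ S n) by (apply Rmult_le_pos; [left; apply exp_pos|lra]).
      destruct (Nat.ltb (S n) K) eqn:E.
      - assert (exp (- beta * Hc (S n)) <= exp (- beta * Hmin)) by (apply exp_mono_neg; auto; lra).
        assert (0 < exp (- beta * Hc (S n))) by apply exp_pos.
        nra.
      - apply Nat.ltb_ge in E.
        assert (exp (- beta * Hc (S n)) <= exp (- beta * (Hinf - e))).
        { apply exp_mono_neg; [lra|]. generalize (HK (S n) E); lra. }
        nra. }
    rewrite sum_plus.
    assert (sum_f_R0 (fun n => if Nat.ltb (S n) K then exp (- beta * Hmin) else 0) N <= INR K * exp (- beta * Hmin))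
      by (apply sum_indic; left; apply exp_pos).
    assert (sum_f_R0 (fun n => exp (- beta * (Hinf - e)) * x ^ S n) N <= exp (- beta * (Hinf - e)) * / (lam - 1)).
    { replace (sum_f_R0 (fun n => exp (- beta * (Hinf - e)) * x ^ S n) N)
        with (sum_f_R0 (fun n => x ^ S n) N * exp (- beta * (Hinf - e))).
      2:{ rewrite <- sum_scal. apply sum_eq. intros; ring. }
      rewrite Rmult_comm. apply Rmult_le_compat_l; [left; apply exp_pos|].
      rewrite <- inv_ratio by lra. apply geom_bound; auto. }
    lra.
  -
    eapply Rle_trans; [|apply (partial_le _ _ Hnn Hcv' (pred k0))].
    eapply Rle_trans; [|apply sum_ge_term; auto].
    unfold Fterm. replace (S (pred k0)) with k0 by lia.
    apply Rmult_le_compat.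
    + apply pow_le; lra.
    + left; apply exp_pos.
    + apply half_pow; lra.
    + apply exp_mono_neg; lra.
  -
    destruct (choose_N (lam - 1) ltac:(lra)) as [N [HN1 HN2]].
    eapply Rle_trans; [|apply (partial_le _ _ Hnn Hcv' (K + N))].
    eapply Rle_trans; [|apply (sum_shift_ge _ K N (/ lam ^ (S (K + N)) * exp (- beta * (Hinf + e))) Hnn)].
    2:{ intros n Hn. unfold Fterm. apply Rmult_le_compat.
        - left; apply inv_pow_pos; lra.
        - left; apply exp_pos.
        - apply Rinv_le_contravar; [apply pow_lt; lra|]. apply Rle_pow; [lra|lia].
        - apply exp_mono_neg; [lra|]. generalize (HK (S n) ltac:(lia)); lra. }
    assert (0 <= sum_f_R0 (Fterm Hc beta lam) K) by (apply sum_nonneg; auto).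
    assert (Hsplit : / lam ^ S (K + N) = / lam ^ S K * / lam ^ N).
    { replace (S (K + N)) with (S K + N)%nat by lia. rewrite pow_add. rewrite Rinv_mult. reflexivity. }
    assert (HlN : exp (- 2) <= / lam ^ N).
    { eapply Rle_trans; [|apply inv_pow_lower; lra]. apply exp_le_mono. lra. }
    assert (HlK : (/ 2) ^ S K <= / lam ^ S K) by (apply half_pow; lra).
    assert (Hd : / (lam - 1) <= INR N) by lra.
    assert (HE : 0 < exp (- beta * (Hinf + e))) by apply exp_pos.
    assert (H2K : 0 < (/ 2) ^ S K) by (apply pow_lt; lra).
    assert (Hd0 : 0 < / (lam - 1)) by (apply Rinv_0_lt_compat; lra).
    assert (Hprod : (/ 2) ^ S K * exp (- 2) <= / lam ^ S (K + N)).
    { rewrite Hsplit. apply Rmult_le_compat; auto; left; [apply pow_lt; lra|apply exp_pos]. }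
    assert ((/ 2) ^ S K * exp (- 2) * exp (- beta * (Hinf + e)) * / (lam - 1)
            <= INR N * (/ lam ^ S (K + N) * exp (- beta * (Hinf + e)))).
    { rewrite (Rmult_comm (INR N)). apply Rmult_le_compat; auto.
      - apply Rmult_le_pos; [apply Rmult_le_pos|]; left; auto. apply exp_pos.
      - left; auto.
      - apply Rmult_le_compat_r; lra. }
    lra.
Qed.

Lemma Ft_bounds e : 0 < e -> exists (K : nat) ca cb, 0 < ca /\ 0 < cb /\
  forall beta lam, 0 < beta -> 1 < lam <= 2 ->
   Ftilde Hc beta lam <= INR K * INR K * exp (- beta * Hmin) + exp (- beta * (Hinf - e)) * 2 * / ((lam - 1) * (lam - 1)) /\
   ca * exp (- beta * (Hmin + e)) <= Ftilde Hc beta lam /\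
   cb * exp (- beta * (Hinf + e)) * / ((lam - 1) * (lam - 1)) <= Ftilde Hc beta lam.
Proof.
  intros He. destruct (get_K e He) as [K [HK1 HK]]. destruct (get_k0 e He) as [k0 [Hk1 Hk]].
  exists K, ((/ 2) ^ k0), ((/ 2) ^ (S K) * exp (- 4)).
  split; [apply pow_lt; lra|]. split; [apply Rmult_lt_0_compat; [apply pow_lt; lra|apply exp_pos]|].
  intros beta lam Hb Hl.
  assert (Hcv' := Ftilde_cv beta lam Hb ltac:(lra)).
  assert (Hnn : forall n, 0 <= Ftterm Hc beta lam n) by (intros; apply Ftterm_nonneg; lra).
  assert (HHmin : forall n, Hmin <= Hc (S n)) by (intros; apply (proj1 Hinf_); lia).
  split; [|split].
  -
    apply (lim_le _ _ _ Hcv'). intros N.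
    set (x := / lam).
    assert (Hx : 0 <= x < 1).
    { split; [left; apply Rinv_0_lt_compat; lra|]. rewrite <- Rinv_1. apply Rinv_lt_contravar; lra. }
    eapply Rle_trans.
    { apply (sum_le _ (fun n => (if Nat.ltb (S n) K then INR K * exp (- beta * Hmin) else 0)
                                + exp (- beta * (Hinf - e)) * (INR (S n) * x ^ S n))).
      intros n. unfold Ftterm. fold x. rewrite <- pow_inv. fold x.
      assert (Hxp : 0 <= x ^ S n <= 1).
      { split; [apply pow_le; lra|]. rewrite <- (pow1 (S n)). apply pow_incr; lra. }
      assert (HS : 0 <= INR (S n)) by apply pos_INR.
      assert (0 <= exp (- beta * (Hinf - e)) * (INR (S n) * x ^ S n)).
      { apply Rmult_le_pos; [left; apply exp_pos|]. apply Rmult_le_pos; lra. }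
      destruct (Nat.ltb (S n) K) eqn:E.
      - apply Nat.ltb_lt in E.
        assert (exp (- beta * Hc (S n)) <= exp (- beta * Hmin)) by (apply exp_mono_neg; auto; lra).
        assert (0 < exp (- beta * Hc (S n))) by apply exp_pos.
        assert (INR (S n) <= INR K) by (apply le_INR; lia).
        assert (INR (S n) * x ^ S n <= INR K) by nra.
        assert (0 <= INR (S n) * x ^ S n) by nra.
        assert (INR (S n) * x ^ S n * exp (- beta * Hc (S n)) <= INR K * exp (- beta * Hmin)).
        { apply Rmult_le_compat; auto. left; auto. }
        lra.
      - apply Nat.ltb_ge in E.
        assert (exp (- beta * Hc (S n)) <= exp (- beta * (Hinf - e))).
        { apply exp_mono_neg; [lra|]. generalize (HK (S n) E); lra. }
        assert (0 <= INR (S n) * x ^ S n) by nra.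
        nra. }
    rewrite sum_plus.
    assert (sum_f_R0 (fun n => if Nat.ltb (S n) K then INR K * exp (- beta * Hmin) else 0) N <= INR K * (INR K * exp (- beta * Hmin)))
      by (apply sum_indic; apply Rmult_le_pos; [apply pos_INR|left; apply exp_pos]).
    assert (sum_f_R0 (fun n => exp (- beta * (Hinf - e)) * (INR (S n) * x ^ S n)) N <= exp (- beta * (Hinf - e)) * 2 * / ((lam - 1) * (lam - 1))).
    { replace (sum_f_R0 (fun n => exp (- beta * (Hinf - e)) * (INR (S n) * x ^ S n)) N)
        with (sum_f_R0 (fun n => INR (S n) * x ^ S n) N * exp (- beta * (Hinf - e))).
      2:{ rewrite <- sum_scal. apply sum_eq. intros; ring. }
      rewrite Rmult_comm, Rmult_assoc. apply Rmult_le_compat_l; [left; apply exp_pos|].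
      eapply Rle_trans; [apply ngeom_bound; auto|].
      unfold x. replace (/ lam / ((1 - / lam) * (1 - / lam))) with (lam * / ((lam - 1) * (lam - 1))) by (field; lra).
      apply Rmult_le_compat_r; [|lra]. left; apply Rinv_0_lt_compat. nra. }
    lra.
  -
    eapply Rle_trans; [|apply (partial_le _ _ Hnn Hcv' (pred k0))].
    eapply Rle_trans; [|apply sum_ge_term; auto].
    unfold Ftterm. replace (S (pred k0)) with k0 by lia.
    assert (H1k : 1 <= INR k0) by (replace 1 with (INR 1) by reflexivity; apply le_INR; lia).
    assert ((/ 2) ^ k0 <= / lam ^ k0) by (apply half_pow; lra).
    assert (0 < (/ 2) ^ k0) by (apply pow_lt; lra).
    assert (exp (- beta * (Hmin + e)) <= exp (- beta * Hc k0)) by (apply exp_mono_neg; lra).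
    assert (0 < exp (- beta * (Hmin + e))) by apply exp_pos.
    assert ((/ 2) ^ k0 * exp (- beta * (Hmin + e)) <= / lam ^ k0 * exp (- beta * Hc k0))
      by (apply Rmult_le_compat; lra).
    assert (0 < (/ 2) ^ k0 * exp (- beta * (Hmin + e))) by (apply Rmult_lt_0_compat; auto).
    assert (0 <= / lam ^ k0 * exp (- beta * Hc k0)) by lra.
    replace (INR k0 * / lam ^ k0 * exp (- beta * Hc k0)) with (INR k0 * (/ lam ^ k0 * exp (- beta * Hc k0))) by ring.
    nra.
  -
    destruct (choose_N (lam - 1) ltac:(lra)) as [N [HN1 HN2]].
    eapply Rle_trans; [|apply (partial_le _ _ Hnn Hcv' (K + N + N))].
    eapply Rle_trans; [|apply (sum_shift_ge _ (K + N) N (INR N * / lam ^ (S (K + N + N)) * exp (- beta * (Hinf + e))) Hnn)].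
    2:{ intros n Hn. unfold Ftterm. apply Rmult_le_compat.
        - apply Rmult_le_pos; [apply pos_INR|left; apply inv_pow_pos; lra].
        - left; apply exp_pos.
        - apply Rmult_le_compat; [apply pos_INR|left; apply inv_pow_pos; lra| |].
          + apply le_INR; lia.
          + apply Rinv_le_contravar; [apply pow_lt; lra|]. apply Rle_pow; [lra|lia].
        - apply exp_mono_neg; [lra|]. generalize (HK (S n) ltac:(lia)); lra. }
    assert (0 <= sum_f_R0 (Ftterm Hc beta lam) (K + N)) by (apply sum_nonneg; auto).
    assert (Hsplit : / lam ^ S (K + N + N) = / lam ^ S K * / lam ^ (N + N)).
    { replace (S (K + N + N)) with (S K + (N + N))%nat by lia. rewrite pow_add. rewrite Rinv_mult. reflexivity. }
    assert (HlN : exp (- 4) <= / lam ^ (N + N)).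
    { eapply Rle_trans; [|apply inv_pow_lower; lra]. apply exp_le_mono. rewrite plus_INR. lra. }
    assert (HlK : (/ 2) ^ S K <= / lam ^ S K) by (apply half_pow; lra).
    assert (Hd : / (lam - 1) <= INR N) by lra.
    assert (HE : 0 < exp (- beta * (Hinf + e))) by apply exp_pos.
    assert (H2K : 0 < (/ 2) ^ S K) by (apply pow_lt; lra).
    assert (Hd0 : 0 < / (lam - 1)) by (apply Rinv_0_lt_compat; lra).
    assert (Hprod : (/ 2) ^ S K * exp (- 4) <= / lam ^ S (K + N + N)).
    { rewrite Hsplit. apply Rmult_le_compat; auto; left; [apply pow_lt; lra|apply exp_pos]. }
    assert (Hdd : / ((lam - 1) * (lam - 1)) <= INR N * INR N).
    { rewrite Rinv_mult. apply Rmult_le_compat; lra. }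
    assert (0 < / ((lam - 1) * (lam - 1))) by (rewrite Rinv_mult; apply Rmult_lt_0_compat; auto).
    assert (0 < (/ 2) ^ S K * exp (- 4)) by (apply Rmult_lt_0_compat; auto; apply exp_pos).
    assert ((/ 2) ^ S K * exp (- 4) * / ((lam - 1) * (lam - 1))
            <= / lam ^ S (K + N + N) * (INR N * INR N)).
    { apply Rmult_le_compat; lra. }
    assert ((/ 2) ^ S K * exp (- 4) * exp (- beta * (Hinf + e)) * / ((lam - 1) * (lam - 1))
            <= INR N * (INR N * / lam ^ S (K + N + N) * exp (- beta * (Hinf + e)))).
    { replace ((/ 2) ^ S K * exp (- 4) * exp (- beta * (Hinf + e)) * / ((lam - 1) * (lam - 1)))
        with (((/ 2) ^ S K * exp (- 4) * / ((lam - 1) * (lam - 1))) * exp (- beta * (Hinf + e))) by ring.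
      replace (INR N * (INR N * / lam ^ S (K + N + N) * exp (- beta * (Hinf + e))))
        with ((/ lam ^ S (K + N + N) * (INR N * INR N)) * exp (- beta * (Hinf + e))) by ring.
      apply Rmult_le_compat_r; lra. }
    lra.
Qed.
End Bounds.


Lemma ln_le' x y : 0 < x -> x <= y -> ln x <= ln y.
Proof. intros Hx [H|H]; [left; apply ln_increasing; auto|subst; lra]. Qed.

Lemma ln_Qexp Q b : 0 < Q -> ln (Q * exp b) = ln Q + b.
Proof. intros. rewrite ln_mult; [|auto|apply exp_pos]. rewrite ln_exp. reflexivity. Qed.

Lemma rate_conv (X : R -> R) L :
  (forall e, 0 < e -> exists Q c B, 0 < Q /\ 0 < c /\ forall beta, B < beta ->
      c * exp (- beta * (L + e)) <= X beta <= Q * exp (- beta * (L - e))) ->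
  cv_at_infty (fun beta => - / beta * ln (X beta)) L.
Proof.
  intros Hr eps Heps. destruct (Hr (eps / 2)) as [Q [c [B [HQ [Hc HB]]]]]; [lra|].
  exists (Rmax B (Rmax 1 (Rmax (2 * Rabs (ln Q) / eps) (2 * Rabs (ln c) / eps)))).
  intros beta Hbeta.
  assert (H1 := Rmax_l B (Rmax 1 (Rmax (2 * Rabs (ln Q) / eps) (2 * Rabs (ln c) / eps)))).
  assert (H2 := Rmax_r B (Rmax 1 (Rmax (2 * Rabs (ln Q) / eps) (2 * Rabs (ln c) / eps)))).
  assert (H3 := Rmax_l 1 (Rmax (2 * Rabs (ln Q) / eps) (2 * Rabs (ln c) / eps))).
  assert (H4 := Rmax_r 1 (Rmax (2 * Rabs (ln Q) / eps) (2 * Rabs (ln c) / eps))).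
  assert (H5 := Rmax_l (2 * Rabs (ln Q) / eps) (2 * Rabs (ln c) / eps)).
  assert (H6 := Rmax_r (2 * Rabs (ln Q) / eps) (2 * Rabs (ln c) / eps)).
  assert (Hb : 0 < beta) by lra.
  destruct (HB beta ltac:(lra)) as [Hlo Hup].
  assert (Hlp : 0 < c * exp (- beta * (L + eps / 2))) by (apply Rmult_lt_0_compat; auto; apply exp_pos).
  assert (HX0 : 0 < X beta) by lra.
  apply ln_le' in Hlo; auto. apply ln_le' in Hup; auto.
  rewrite ln_Qexp in Hlo, Hup; auto.
  assert (HQb : Rabs (ln Q) < eps / 2 * beta).
  { assert (2 * Rabs (ln Q) / eps < beta) by lra.
    apply (Rmult_lt_compat_r (eps / 2)) in H; [|lra].
    replace (2 * Rabs (ln Q) / eps * (eps / 2)) with (Rabs (ln Q)) in H by (field; lra). lra. }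
  assert (Hcb : Rabs (ln c) < eps / 2 * beta).
  { assert (2 * Rabs (ln c) / eps < beta) by lra.
    apply (Rmult_lt_compat_r (eps / 2)) in H; [|lra].
    replace (2 * Rabs (ln c) / eps * (eps / 2)) with (Rabs (ln c)) in H by (field; lra). lra. }
  generalize (Rle_abs (ln Q)) (Rle_abs (- ln Q)) (Rle_abs (ln c)) (Rle_abs (- ln c)).
  rewrite !Rabs_Ropp. intros a1 a2 a3 a4.
  replace (- / beta * ln (X beta) - L) with (- (ln (X beta) + beta * L) / beta) by (field; lra).
  apply Rabs_def1.
  - apply (Rmult_lt_reg_r beta); auto. unfold Rdiv. rewrite Rmult_assoc, Rinv_l by lra. nra.
  - apply (Rmult_lt_reg_r beta); auto. unfold Rdiv. rewrite Rmult_assoc, Rinv_l by lra. nra.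
Qed.

Lemma min_cases a b : Rmin a b = a /\ a <= b \/ Rmin a b = b /\ b <= a.
Proof. unfold Rmin. destruct (Rle_dec a b); [left|right]; split; auto; lra. Qed.

Lemma part_rate (X Y : R -> R) (Hmin Hinf g : R) :
  (forall e, 0 < e -> exists K ca cb, 0 <= K /\ 0 < ca /\ 0 < cb /\ forall beta, 0 < beta ->
     X beta <= K * exp (- beta * Hmin) + exp (- beta * (Hinf - e)) * Y beta /\
     ca * exp (- beta * (Hmin + e)) <= X beta /\
     cb * exp (- beta * (Hinf + e)) * Y beta <= X beta) ->
  (forall e, 0 < e -> exists Q c B, 0 < Q /\ 0 < c /\ forall beta, B < beta ->
     c * exp (beta * (g - e)) <= Y beta <= Q * exp (beta * (g + e))) ->
  cv_at_infty (fun beta => - / beta * ln (X beta)) (Rmin Hmin (Hinf - g)).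
Proof.
  intros HX HY. apply rate_conv. intros eps Heps.
  set (e := eps / 2).
  destruct (HX e ltac:(unfold e; lra)) as [K [ca [cb [HK [Hca [Hcb HXb]]]]]].
  destruct (HY e ltac:(unfold e; lra)) as [Q [c [B [HQ [Hc HYb]]]]].
  set (L := Rmin Hmin (Hinf - g)).
  assert (HL1 : L <= Hmin) by apply Rmin_l. assert (HL2 : L <= Hinf - g) by apply Rmin_r.
  exists (K + Q), (Rmin ca (cb * c)), (Rmax B 0).
  split; [lra|]. split; [apply Rmin_pos; auto; apply Rmult_lt_0_compat; auto|].
  intros beta Hbeta. generalize (Rmax_l B 0) (Rmax_r B 0); intros Hm1 Hm2.
  assert (Hb : 0 < beta) by lra.
  destruct (HXb beta Hb) as [Xu [Xla Xlb]]. destruct (HYb beta ltac:(lra)) as [Yl Yu].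
  split.
  - destruct (min_cases Hmin (Hinf - g)) as [[HL Hle]|[HL Hle]]; fold L in HL.
    + eapply Rle_trans; [|apply Xla].
      apply Rmult_le_compat; [left; apply Rmin_pos; auto; apply Rmult_lt_0_compat; auto|left; apply exp_pos|apply Rmin_l|].
      apply exp_mono_neg; unfold e; lra.
    + eapply Rle_trans; [|apply Xlb].
      assert (Hy : c * exp (beta * (g - e)) * (cb * exp (- beta * (Hinf + e)))
                   <= Y beta * (cb * exp (- beta * (Hinf + e)))).
      { apply Rmult_le_compat_r; auto. left; apply Rmult_lt_0_compat; auto; apply exp_pos. }
      replace (cb * exp (- beta * (Hinf + e)) * Y beta) with (Y beta * (cb * exp (- beta * (Hinf + e)))) by ring.
      eapply Rle_trans; [|apply Hy].
      replace (c * exp (beta * (g - e)) * (cb * exp (- beta * (Hinf + e))))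
        with ((cb * c) * exp (- beta * (Hinf - g + 2 * e))).
      2:{ replace (- beta * (Hinf - g + 2 * e)) with (beta * (g - e) + - beta * (Hinf + e)) by ring.
          rewrite exp_plus. ring. }
      apply Rmult_le_compat; [left; apply Rmin_pos; auto; apply Rmult_lt_0_compat; auto|left; apply exp_pos|apply Rmin_r|].
      apply exp_mono_neg; unfold e in *; lra.
  - eapply Rle_trans; [apply Xu|].
    assert (HE : 0 < exp (- beta * (Hinf - e))) by apply exp_pos.
    assert (exp (- beta * (Hinf - e)) * Y beta <= exp (- beta * (Hinf - e)) * (Q * exp (beta * (g + e))))
      by (apply Rmult_le_compat_l; lra).
    replace (exp (- beta * (Hinf - e)) * (Q * exp (beta * (g + e)))) with (Q * exp (- beta * (Hinf - g - 2 * e))) in H.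
    2:{ replace (- beta * (Hinf - g - 2 * e)) with (- beta * (Hinf - e) + beta * (g + e)) by ring.
        rewrite exp_plus. ring. }
    assert (exp (- beta * Hmin) <= exp (- beta * (L - eps))) by (apply exp_mono_neg; lra).
    assert (exp (- beta * (Hinf - g - 2 * e)) <= exp (- beta * (L - eps))) by (apply exp_mono_neg; unfold e; lra).
    assert (K * exp (- beta * Hmin) <= K * exp (- beta * (L - eps))) by (apply Rmult_le_compat_l; auto).
    assert (Q * exp (- beta * (Hinf - g - 2 * e)) <= Q * exp (- beta * (L - eps))) by (apply Rmult_le_compat_l; lra).
    lra.
Qed.


Lemma Hmin_zero (Hc : nat -> R) Hinf Hmin :
  (forall n, (1 <= n)%nat -> 0 < Hc n) -> Un_cv Hc Hinf -> is_inf_from1 Hc Hmin ->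
  Hmin = 0 -> Hinf = 0.
Proof.
  intros Hp Hcv Hi Hm0.
  assert (Hge : 0 <= Hinf).
  { apply Rnot_lt_le; intros Hlt. destruct (Hcv (- Hinf)) as [N HN]; [lra|].
    specialize (HN (S N) ltac:(lia)). unfold Rdist in HN. apply Rabs_def2 in HN.
    generalize (Hp (S N) ltac:(lia)). lra. }
  assert (Hfin : forall K, exists m, 0 < m /\ forall n, (1 <= n)%nat -> (n < K)%nat -> m <= Hc n).
  { induction K as [|K [m [Hm HmK]]].
    - exists 1. split; [lra|]. intros; lia.
    - destruct K as [|K].
      + exists 1. split; [lra|]. intros; lia.
      + exists (Rmin m (Hc (S K))). split; [apply Rmin_pos; auto; apply Hp; lia|].
        intros n Hn1 Hn2. destruct (Nat.eq_dec n (S K)) as [->|Hne]; [apply Rmin_r|].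
        eapply Rle_trans; [apply Rmin_l|]. apply HmK; lia. }
  destruct (Rle_lt_or_eq_dec 0 Hinf Hge) as [Hpos|]; [|auto].
  exfalso. destruct (Hcv (Hinf / 2)) as [N HN]; [lra|].
  destruct (Hfin N) as [m [Hm HmN]].
  assert (Hlb : Rmin m (Hinf / 2) <= Hmin).
  { apply (proj2 Hi). intros n Hn. destruct (Nat.ltb_spec n N).
    - eapply Rle_trans; [apply Rmin_l|]. apply HmN; auto.
    - specialize (HN n ltac:(lia)). unfold Rdist in HN. apply Rabs_def2 in HN.
      eapply Rle_trans; [apply Rmin_r|]. lra. }
  assert (0 < Rmin m (Hinf / 2)) by (apply Rmin_pos; lra). lra.
Qed.

Lemma prod_le1 a b x y : 0 <= a -> 0 <= b -> a <= x -> b <= y -> x * y = 1 -> a * b <= 1.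
Proof. intros. rewrite <- H3. apply Rmult_le_compat; auto. Qed.

Lemma gamma_cases a0 a1 m0 m1 :
  let g := puiseux_gamma a0 a1 m0 m1 in
  g <= (a1 + a0) / 2 /\ g <= m0 + a1 /\ g <= m1 + a0 /\
  (g = (a1 + a0) / 2 \/ g = m0 + a1 \/ g = m1 + a0).
Proof.
  intros g. unfold g, puiseux_gamma, Rmin.
  repeat destruct Rle_dec; lra.
Qed.

Lemma exp_sq x : exp x * exp x = exp (2 * x).
Proof. rewrite <- exp_plus. f_equal. ring. Qed.

Section Main.
Variables (H : Sigma -> R) (H0 H1 : nat -> R) (Hinf0 Hinf1 Hmin0 Hmin1 : R) (lam : R -> R).
Hypothesis Hrdw : reduced_double_well H H0 H1.
Hypothesis Hcv0 : Un_cv H0 Hinf0.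
Hypothesis Hcv1 : Un_cv H1 Hinf1.
Hypothesis Hi0 : is_inf_from1 H0 Hmin0.
Hypothesis Hi1 : is_inf_from1 H1 Hmin1.
Hypothesis Hlam : forall beta, 0 < beta -> is_pos_cont_eigenvalue H beta (lam beta).

Lemma pos0 : forall n, (1 <= n)%nat -> 0 < H0 n.
Proof. destruct Hrdw as [_ [_ [_ [_ [Hr0 _]]]]]. intros n Hn; apply (Hr0 n Hn). Qed.
Lemma pos1 : forall n, (1 <= n)%nat -> 0 < H1 n.
Proof. destruct Hrdw as [_ [_ [_ [_ [_ [Hr1 _]]]]]]. intros n Hn; apply (Hr1 n Hn). Qed.

Lemma lam_facts beta : 0 < beta ->
  1 < lam beta <= 2 /\ Fbeta H0 beta (lam beta) * Fbeta H1 beta (lam beta) = 1.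
Proof.
  intros Hb. destruct (Hlam beta Hb) as [Phi [Hc [Hp He]]].
  destruct Hrdw as [_ [_ [_ [Hz [Hr0 [Hr1 _]]]]]].
  assert (Hb0 : forall n, 0 <= beta * H0 (S n)) by (intros n; generalize (pos0 (S n) ltac:(lia)); nra).
  assert (Hb1 : forall n, 0 <= beta * H1 (S n)) by (intros n; generalize (pos1 (S n) ltac:(lia)); nra).
  assert (Hl : 1 < lam beta) by (apply (lam_gt_1 H beta (lam beta) Phi); auto).
  assert (Hk : Fbeta H0 beta (lam beta) * Fbeta H1 beta (lam beta) = 1).
  { apply (key_identity H H0 H1 beta (lam beta) Phi); auto.
    - intros n Hn; apply (Hr0 n Hn).
    - intros n Hn; apply (Hr1 n Hn). }
  split; [split; auto|auto].
  destruct (Fbeta_cv H0 beta (lam beta) Hl Hb0) as [_ [Ha1 Ha2]].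
  destruct (Fbeta_cv H1 beta (lam beta) Hl Hb1) as [_ [Hc1 Hc2]].
  apply Rnot_lt_le; intros Hgt.
  assert (/ (lam beta - 1) < 1).
  { rewrite <- Rinv_1. apply Rinv_lt_contravar; lra. }
  assert (0 < / (lam beta - 1)) by (apply Rinv_0_lt_compat; lra).
  assert (Fbeta H0 beta (lam beta) * Fbeta H1 beta (lam beta) <= / (lam beta - 1) * / (lam beta - 1))
    by (apply Rmult_le_compat; lra).
  nra.
Qed.

Definition gam := puiseux_gamma Hinf0 Hinf1 Hmin0 Hmin1.

Lemma delta_bounds : forall e, 0 < e -> exists Q c B, 0 < Q /\ 0 < c /\ forall beta, B < beta ->
  c * exp (- beta * (gam + e)) <= lam beta - 1 <= Q * exp (- beta * (gam - e)).
Proof.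
  intros eps Heps. set (e := eps / 2).
  destruct (F_bounds H0 Hinf0 Hmin0 pos0 Hcv0 Hi0 e ltac:(unfold e; lra)) as [K0 [ca0 [cb0 [Hca0 [Hcb0 HF0]]]]].
  destruct (F_bounds H1 Hinf1 Hmin1 pos1 Hcv1 Hi1 e ltac:(unfold e; lra)) as [K1 [ca1 [cb1 [Hca1 [Hcb1 HF1]]]]].
  assert (Hm0 := Hmin_nonneg H0 Hmin0 pos0 Hi0).
  assert (Hm1 := Hmin_nonneg H1 Hmin1 pos1 Hi1).
  destruct (gamma_cases Hinf0 Hinf1 Hmin0 Hmin1) as [Hg1 [Hg2 [Hg3 Hg]]]. fold gam in Hg1, Hg2, Hg3, Hg.
  set (Q := 4 * (INR K0 + INR K1 + 1)).
  assert (HK0 := pos_INR K0). assert (HK1 := pos_INR K1).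
  set (s := Hmin0 + Hmin1).
  set (Bs := Rmax 0 (ln (4 * INR K0 * INR K1 + 1) / s)).
  exists Q, (Rmin (ca0 * cb1) (Rmin (cb0 * ca1) (Rmin 1 (cb0 * cb1)))), Bs.
  split; [unfold Q; lra|].
  split; [repeat apply Rmin_pos; try apply Rmult_lt_0_compat; auto; lra|].
  intros beta Hbeta.
  assert (Hb : 0 < beta) by (generalize (Rmax_l 0 (ln (4 * INR K0 * INR K1 + 1) / s)); unfold Bs in Hbeta; lra).
  destruct (lam_facts beta Hb) as [Hl Hk].
  set (d := lam beta - 1) in *.
  set (F0 := Fbeta H0 beta (lam beta)) in *. set (F1 := Fbeta H1 beta (lam beta)) in *.
  destruct (HF0 beta (lam beta) Hb Hl) as [U0 [La0 Lb0]].
  destruct (HF1 beta (lam beta) Hb Hl) as [U1 [La1 Lb1]].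
  fold F0 in U0, La0, Lb0. fold F1 in U1, La1, Lb1. fold d in U0, U1, Lb0, Lb1.
  assert (Hd : 0 < d) by (unfold d; lra).
  assert (Hid : 0 < / d) by (apply Rinv_0_lt_compat; auto).
  split.
  -
    set (c := Rmin (ca0 * cb1) (Rmin (cb0 * ca1) (Rmin 1 (cb0 * cb1)))).
    assert (Hc1 : c <= ca0 * cb1) by apply Rmin_l.
    assert (Hc2 : c <= cb0 * ca1) by (eapply Rle_trans; [apply Rmin_r|apply Rmin_l]).
    assert (Hc3 : c <= 1) by (eapply Rle_trans; [apply Rmin_r|]; eapply Rle_trans; [apply Rmin_r|apply Rmin_l]).
    assert (Hc4 : c <= cb0 * cb1) by (eapply Rle_trans; [apply Rmin_r|]; eapply Rle_trans; [apply Rmin_r|apply Rmin_r]).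
    assert (Hc0 : 0 < c) by (repeat apply Rmin_pos; try apply Rmult_lt_0_compat; auto; lra).
    assert (HE : exp (- beta * (gam + 2 * e)) <= exp (- beta * (gam + eps))) by (apply exp_mono_neg; unfold e; lra).
    assert (HEp : 0 < exp (- beta * (gam + 2 * e))) by apply exp_pos.
    destruct Hg as [Hg|[Hg|Hg]].
    +
      assert (Hp : cb0 * exp (- beta * (Hinf0 + e)) * / d * (cb1 * exp (- beta * (Hinf1 + e)) * / d) <= 1).
      { apply (prod_le1 _ _ F0 F1); auto.
        - apply Rmult_le_pos; [apply Rmult_le_pos; [lra|left; apply exp_pos]|lra].
        - apply Rmult_le_pos; [apply Rmult_le_pos; [lra|left; apply exp_pos]|lra]. }
      set (E := exp (- beta * (gam + e))).
      assert (HEE : exp (- beta * (Hinf0 + e)) * exp (- beta * (Hinf1 + e)) = E * E).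
      { unfold E. rewrite <- !exp_plus. f_equal. rewrite Hg. field. }
      assert (Hq : cb0 * cb1 * (E * E) <= d * d).
      { rewrite <- HEE. apply (Rmult_le_reg_r (/ d * / d)); [apply Rmult_lt_0_compat; auto|].
        replace (d * d * (/ d * / d)) with 1 by (field; lra). lra. }
      assert (HE0 : 0 < E) by apply exp_pos.
      assert (Hcd : c * E <= d).
      { apply Rnot_lt_le; intros Hlt.
        assert (d * d < (c * E) * (c * E)) by (apply Rmult_le_0_lt_compat; lra).
        assert (c * c <= cb0 * cb1) by (assert (c * c <= c * 1) by (apply Rmult_le_compat_l; lra); lra).
        assert (c * c * (E * E) <= cb0 * cb1 * (E * E)) by (apply Rmult_le_compat_r; nra).
        nra. }
      assert (exp (- beta * (gam + eps)) <= E) by (apply exp_mono_neg; unfold e; lra).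
      assert (c * exp (- beta * (gam + eps)) <= c * E) by (apply Rmult_le_compat_l; lra).
      lra.
    +
      assert (Hp : ca0 * exp (- beta * (Hmin0 + e)) * (cb1 * exp (- beta * (Hinf1 + e)) * / d) <= 1).
      { apply (prod_le1 _ _ F0 F1); auto.
        - apply Rmult_le_pos; [lra|left; apply exp_pos].
        - apply Rmult_le_pos; [apply Rmult_le_pos; [lra|left; apply exp_pos]|lra]. }
      assert (HEE : exp (- beta * (Hmin0 + e)) * exp (- beta * (Hinf1 + e)) = exp (- beta * (gam + 2 * e))).
      { rewrite <- !exp_plus. f_equal. rewrite Hg. ring. }
      assert (Hq : ca0 * cb1 * exp (- beta * (gam + 2 * e)) <= d).
      { rewrite <- HEE. apply (Rmult_le_reg_r (/ d)); auto.
        replace (d * / d) with 1 by (field; lra). lra. }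
      assert (exp (- beta * (gam + eps)) <= exp (- beta * (gam + 2 * e))) by (apply exp_mono_neg; unfold e; lra).
      assert (c * exp (- beta * (gam + eps)) <= ca0 * cb1 * exp (- beta * (gam + 2 * e)))
        by (apply Rmult_le_compat; try lra; left; apply exp_pos).
      lra.
    +
      assert (Hp : cb0 * exp (- beta * (Hinf0 + e)) * / d * (ca1 * exp (- beta * (Hmin1 + e))) <= 1).
      { apply (prod_le1 _ _ F0 F1); auto.
        - apply Rmult_le_pos; [apply Rmult_le_pos; [lra|left; apply exp_pos]|lra].
        - apply Rmult_le_pos; [lra|left; apply exp_pos]. }
      assert (HEE : exp (- beta * (Hinf0 + e)) * exp (- beta * (Hmin1 + e)) = exp (- beta * (gam + 2 * e))).
      { rewrite <- !exp_plus. f_equal. rewrite Hg. ring. }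
      assert (Hq : cb0 * ca1 * exp (- beta * (gam + 2 * e)) <= d).
      { rewrite <- HEE. apply (Rmult_le_reg_r (/ d)); auto.
        replace (d * / d) with 1 by (field; lra). lra. }
      assert (exp (- beta * (gam + eps)) <= exp (- beta * (gam + 2 * e))) by (apply exp_mono_neg; unfold e; lra).
      assert (c * exp (- beta * (gam + eps)) <= cb0 * ca1 * exp (- beta * (gam + 2 * e)))
        by (apply Rmult_le_compat; try lra; left; apply exp_pos).
      lra.
  -
    set (D := exp (- beta * (gam - eps))).
    assert (HD : 0 < D) by apply exp_pos.
    apply Rnot_lt_le; intros Hlt.
    set (r := / d) in *.
    assert (HQ4 : 4 <= Q) by (unfold Q; lra).
    assert (Hw : D * r * Q < 1).
    { assert (Hx : Q * D * r < d * r) by (apply Rmult_lt_compat_r; auto).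
      replace (D * r * Q) with (Q * D * r) by ring. unfold r in *. replace (d * / d) with 1 in Hx by (field; lra). lra. }
    set (w := D * r) in *.
    assert (Hw0 : 0 < w) by (unfold w; apply Rmult_lt_0_compat; auto).
    destruct (Rle_lt_dec s 0) as [Hs|Hs].
    +
      assert (Z0 : Hmin0 = 0) by (unfold s in Hs; lra). assert (Z1 : Hmin1 = 0) by (unfold s in Hs; lra).
      assert (Z2 : Hinf0 = 0) by (apply (Hmin_zero H0 Hinf0 Hmin0 pos0 Hcv0 Hi0); auto).
      assert (Z3 : Hinf1 = 0) by (apply (Hmin_zero H1 Hinf1 Hmin1 pos1 Hcv1 Hi1); auto).
      assert (Zg : gam = 0) by (destruct Hg as [Hg|[Hg|Hg]]; lra).
      assert (1 <= D).
      { unfold D. rewrite <- exp_0. apply exp_le_mono. rewrite Zg. nra. }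
      assert (Q * 1 <= Q * D) by (apply Rmult_le_compat_l; lra).
      unfold d in Hlt. lra.
    + set (a0 := exp (- beta * Hmin0)) in *. set (a1 := exp (- beta * Hmin1)) in *.
      set (b0 := exp (- beta * (Hinf0 - e))) in *. set (b1 := exp (- beta * (Hinf1 - e))) in *.
      assert (Ha0 : 0 < a0) by apply exp_pos. assert (Ha1 : 0 < a1) by apply exp_pos.
      assert (Hb0' : 0 < b0) by apply exp_pos. assert (Hb1' : 0 < b1) by apply exp_pos.
      assert (HF0p : 0 <= F0) by (eapply Rle_trans; [|apply La0]; left; apply Rmult_lt_0_compat; auto; apply exp_pos).
      assert (HF1p : 0 <= F1) by (eapply Rle_trans; [|apply La1]; left; apply Rmult_lt_0_compat; auto; apply exp_pos).
      assert (Hprod : 1 <= (INR K0 * a0 + b0 * r) * (INR K1 * a1 + b1 * r)).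
      { rewrite <- Hk. apply Rmult_le_compat; auto. }
      assert (Hab : a0 * b1 <= D).
      { unfold a0, b1, D. rewrite <- exp_plus. apply exp_le_mono. unfold e in *. nra. }
      assert (Hba : b0 * a1 <= D).
      { unfold a1, b0, D. rewrite <- exp_plus. apply exp_le_mono. unfold e in *. nra. }
      assert (Hbb : b0 * b1 <= D * D).
      { unfold b0, b1, D. rewrite <- !exp_plus. apply exp_le_mono. unfold e in *. nra. }
      assert (Haa : a0 * a1 * (4 * INR K0 * INR K1 + 1) < 1).
      { assert (Hl4 : 0 < 4 * INR K0 * INR K1 + 1) by nra.
        assert (Hbs : ln (4 * INR K0 * INR K1 + 1) < beta * s).
        { assert (Hy : ln (4 * INR K0 * INR K1 + 1) / s < beta).
          { generalize (Rmax_r 0 (ln (4 * INR K0 * INR K1 + 1) / s)). unfold Bs in Hbeta. lra. }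
          apply (Rmult_lt_compat_r s) in Hy; auto.
          unfold Rdiv in Hy. rewrite Rmult_assoc, Rinv_l in Hy by lra. lra. }
        apply exp_increasing in Hbs. rewrite exp_ln in Hbs by auto.
        assert (a0 * a1 * exp (beta * s) = 1).
        { unfold a0, a1. rewrite <- !exp_plus. rewrite <- exp_0. f_equal. unfold s. ring. }
        assert (0 < a0 * a1) by (apply Rmult_lt_0_compat; auto).
        assert (a0 * a1 * (4 * INR K0 * INR K1 + 1) < a0 * a1 * exp (beta * s))
          by (apply Rmult_lt_compat_l; auto).
        lra. }
      assert (E1 : (INR K0 * a0 + b0 * r) * (INR K1 * a1 + b1 * r)
                   = INR K0 * INR K1 * (a0 * a1) + INR K0 * (a0 * b1) * r + INR K1 * (b0 * a1) * r + (b0 * b1) * (r * r)) by ring.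
      assert (Hr0 : 0 < r) by (unfold r; auto).
      assert (T2 : INR K0 * (a0 * b1) * r <= INR K0 * w).
      { unfold w. rewrite Rmult_assoc. apply Rmult_le_compat_l; [apply pos_INR|].
        apply Rmult_le_compat_r; lra. }
      assert (T3 : INR K1 * (b0 * a1) * r <= INR K1 * w).
      { unfold w. rewrite Rmult_assoc. apply Rmult_le_compat_l; [apply pos_INR|].
        apply Rmult_le_compat_r; lra. }
      assert (T4 : (b0 * b1) * (r * r) <= w * w).
      { unfold w. replace (D * r * (D * r)) with ((D * D) * (r * r)) by ring.
        apply Rmult_le_compat_r; [nra|lra]. }
      assert (T1 : INR K0 * INR K1 * (a0 * a1) * 4 < 1).
      { assert (0 <= INR K0 * INR K1) by nra. nra. }
      assert (Hwq : (INR K0 + INR K1) * w * 4 < 1).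
      { unfold Q in Hw. nra. }
      assert (Hww : w * w * 4 < 1) by (unfold Q in Hw; nra).
      nra.
Qed.

Lemma inv_exp_bounds c Q d a b beta : 0 < c -> 0 < Q ->
  c * exp (- beta * a) <= d <= Q * exp (- beta * b) ->
  / Q * exp (beta * b) <= / d <= / c * exp (beta * a).
Proof.
  intros Hc HQ [Ha1 Ha2].
  assert (Ha : 0 < c * exp (- beta * a)) by (apply Rmult_lt_0_compat; auto; apply exp_pos).
  split.
  - replace (/ Q * exp (beta * b)) with (/ (Q * exp (- beta * b))).
    + apply Rinv_le_contravar; [|lra]. lra.
    + rewrite Rinv_mult. f_equal. replace (- beta * b) with (- (beta * b)) by ring.
      rewrite exp_Ropp, Rinv_inv. reflexivity.
  - replace (/ c * exp (beta * a)) with (/ (c * exp (- beta * a))).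
    + apply Rinv_le_contravar; [|lra]. lra.
    + rewrite Rinv_mult. f_equal. replace (- beta * a) with (- (beta * a)) by ring.
      rewrite exp_Ropp, Rinv_inv. reflexivity.
Qed.

Lemma part1 : cv_at_infty (fun beta => - / beta * ln (lam beta - 1)) gam.
Proof. apply rate_conv. apply delta_bounds. Qed.

Lemma Ybounds1 : forall e, 0 < e -> exists Q c B, 0 < Q /\ 0 < c /\ forall beta, B < beta ->
     c * exp (beta * (gam - e)) <= / (lam beta - 1) <= Q * exp (beta * (gam + e)).
Proof.
  intros e He. destruct (delta_bounds e He) as [Q [c [B [HQ [Hc HB]]]]].
  exists (/ c), (/ Q), B. split; [apply Rinv_0_lt_compat; auto|]. split; [apply Rinv_0_lt_compat; auto|].
  intros beta Hb. apply (inv_exp_bounds c Q); auto.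
Qed.

Lemma Ybounds2 : forall e, 0 < e -> exists Q c B, 0 < Q /\ 0 < c /\ forall beta, B < beta ->
     c * exp (beta * (2 * gam - e)) <= 2 * / ((lam beta - 1) * (lam beta - 1)) <= Q * exp (beta * (2 * gam + e)).
Proof.
  intros e He. destruct (Ybounds1 (e / 2)) as [Q [c [B [HQ [Hc HB]]]]]; [lra|].
  exists (2 * (Q * Q)), (2 * (c * c)), B.
  split; [nra|]. split; [nra|].
  intros beta Hb. destruct (HB beta Hb) as [L U].
  assert (Hp : 0 < c * exp (beta * (gam - e / 2))) by (apply Rmult_lt_0_compat; auto; apply exp_pos).
  rewrite Rinv_mult.
  replace (2 * (c * c) * exp (beta * (2 * gam - e)))
    with (2 * ((c * exp (beta * (gam - e / 2))) * (c * exp (beta * (gam - e / 2))))).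
  2:{ replace (c * exp (beta * (gam - e / 2)) * (c * exp (beta * (gam - e / 2))))
        with ((c * c) * (exp (beta * (gam - e / 2)) * exp (beta * (gam - e / 2)))) by ring.
      rewrite <- exp_plus. replace (beta * (gam - e / 2) + beta * (gam - e / 2)) with (beta * (2 * gam - e)) by field.
      ring. }
  replace (2 * (Q * Q) * exp (beta * (2 * gam + e)))
    with (2 * ((Q * exp (beta * (gam + e / 2))) * (Q * exp (beta * (gam + e / 2))))).
  2:{ replace (Q * exp (beta * (gam + e / 2)) * (Q * exp (beta * (gam + e / 2))))
        with ((Q * Q) * (exp (beta * (gam + e / 2)) * exp (beta * (gam + e / 2)))) by ring.
      rewrite <- exp_plus. replace (beta * (gam + e / 2) + beta * (gam + e / 2)) with (beta * (2 * gam + e)) by field.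
      ring. }
  split; apply Rmult_le_compat_l; try lra; apply Rmult_le_compat; lra.
Qed.

Lemma partF0 : cv_at_infty (fun beta => - / beta * ln (Fbeta H0 beta (lam beta))) (Rmin Hmin0 (Hinf0 - gam)).
Proof.
  apply (part_rate _ (fun beta => / (lam beta - 1))); [|apply Ybounds1].
  intros e He. destruct (F_bounds H0 Hinf0 Hmin0 pos0 Hcv0 Hi0 e He) as [K [ca [cb [Hca [Hcb HF]]]]].
  exists (INR K), ca, cb. split; [apply pos_INR|]. split; auto. split; auto.
  intros beta Hb. destruct (lam_facts beta Hb) as [Hl _]. apply HF; auto.
Qed.

Lemma partF1 : cv_at_infty (fun beta => - / beta * ln (Fbeta H1 beta (lam beta))) (Rmin Hmin1 (Hinf1 - gam)).
Proof.
  apply (part_rate _ (fun beta => / (lam beta - 1))); [|apply Ybounds1].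
  intros e He. destruct (F_bounds H1 Hinf1 Hmin1 pos1 Hcv1 Hi1 e He) as [K [ca [cb [Hca [Hcb HF]]]]].
  exists (INR K), ca, cb. split; [apply pos_INR|]. split; auto. split; auto.
  intros beta Hb. destruct (lam_facts beta Hb) as [Hl _]. apply HF; auto.
Qed.

Lemma partFt0 : cv_at_infty (fun beta => - / beta * ln (Ftilde H0 beta (lam beta))) (Rmin Hmin0 (Hinf0 - 2 * gam)).
Proof.
  apply (part_rate _ (fun beta => 2 * / ((lam beta - 1) * (lam beta - 1)))); [|apply Ybounds2].
  intros e He. destruct (Ft_bounds H0 Hinf0 Hmin0 pos0 Hcv0 Hi0 e He) as [K [ca [cb [Hca [Hcb HF]]]]].
  exists (INR K * INR K), ca, (cb / 2). split; [apply Rmult_le_pos; apply pos_INR|]. split; auto. split; [lra|].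
  intros beta Hb. destruct (lam_facts beta Hb) as [Hl _]. destruct (HF beta (lam beta) Hb Hl) as [U [La Lb]].
  split; [|split]; auto.
  - rewrite <- Rmult_assoc. exact U.
  - replace (cb / 2 * exp (- beta * (Hinf0 + e)) * (2 * / ((lam beta - 1) * (lam beta - 1))))
      with (cb * exp (- beta * (Hinf0 + e)) * / ((lam beta - 1) * (lam beta - 1))) by (field; lra). exact Lb.
Qed.

Lemma partFt1 : cv_at_infty (fun beta => - / beta * ln (Ftilde H1 beta (lam beta))) (Rmin Hmin1 (Hinf1 - 2 * gam)).
Proof.
  apply (part_rate _ (fun beta => 2 * / ((lam beta - 1) * (lam beta - 1)))); [|apply Ybounds2].
  intros e He. destruct (Ft_bounds H1 Hinf1 Hmin1 pos1 Hcv1 Hi1 e He) as [K [ca [cb [Hca [Hcb HF]]]]].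
  exists (INR K * INR K), ca, (cb / 2). split; [apply Rmult_le_pos; apply pos_INR|]. split; auto. split; [lra|].
  intros beta Hb. destruct (lam_facts beta Hb) as [Hl _]. destruct (HF beta (lam beta) Hb Hl) as [U [La Lb]].
  split; [|split]; auto.
  - rewrite <- Rmult_assoc. exact U.
  - replace (cb / 2 * exp (- beta * (Hinf1 + e)) * (2 * / ((lam beta - 1) * (lam beta - 1))))
      with (cb * exp (- beta * (Hinf1 + e)) * / ((lam beta - 1) * (lam beta - 1))) by (field; lra). exact Lb.
Qed.

End Main.

Theorem proposition3p7
  (H : Sigma -> R) (H0 H1 : nat -> R)
  (Hinf0 Hinf1 Hmin0 Hmin1 : R) (lam : R -> R) :
  reduced_double_well H H0 H1 ->
  Un_cv H0 Hinf0 -> Un_cv H1 Hinf1 ->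
  is_inf_from1 H0 Hmin0 -> is_inf_from1 H1 Hmin1 ->
  (forall beta, 0 < beta -> is_pos_cont_eigenvalue H beta (lam beta)) ->
  let gamma := puiseux_gamma Hinf0 Hinf1 Hmin0 Hmin1 in
  cv_at_infty (fun beta => - / beta * ln (lam beta - 1)) gamma /\
  cv_at_infty (fun beta => - / beta * ln (Fbeta H0 beta (lam beta)))
              (Rmin Hmin0 (Hinf0 - gamma)) /\
  cv_at_infty (fun beta => - / beta * ln (Fbeta H1 beta (lam beta)))
              (Rmin Hmin1 (Hinf1 - gamma)) /\
  cv_at_infty (fun beta => - / beta * ln (Ftilde H0 beta (lam beta)))
              (Rmin Hmin0 (Hinf0 - 2 * gamma)) /\
  cv_at_infty (fun beta => - / beta * ln (Ftilde H1 beta (lam beta)))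
              (Rmin Hmin1 (Hinf1 - 2 * gamma)).
Proof.
  intros Hr Hc0 Hc1 Hi0 Hi1 Hl gamma.
  split; [apply (part1 H H0 H1 Hinf0 Hinf1 Hmin0 Hmin1 lam); auto|].
  split; [apply (partF0 H H0 H1 Hinf0 Hinf1 Hmin0 Hmin1 lam); auto|].
  split; [apply (partF1 H H0 H1 Hinf0 Hinf1 Hmin0 Hmin1 lam); auto|].
  split; [apply (partFt0 H H0 H1 Hinf0 Hinf1 Hmin0 Hmin1 lam); auto|].
  apply (partFt1 H H0 H1 Hinf0 Hinf1 Hmin0 Hmin1 lam); auto.
Qed.
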